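(* Let $f\in\mathcal A_C$ and $g\in L^1$, and define $F(x)=\int_{-\infty}^xf$ and $G(x)=\int_{-\infty}^xg$. Then $f*G\in C^0(\overline{\mathbb R})$ and $f*G(x)=F*g(x)$ for all $x\in\mathbb R$, where $F*g(x)=\int_{-\infty}^\infty F(x-y)g(y)\,dy$ is a Lebesgue integral.
   Context: $C^0(\overline{\mathbb R})$: continuous $F:\mathbb R\to\mathbb R$ with finite limits $F(\pm\infty)$. $\mathcal B_C=\{F\in C^0(\overline{\mathbb R}):F(-\infty)=0\}$; $\mathcal A_C=\{f\in\mathcal D'(\mathbb R): f=F'\text{ (distributional derivative) for some } F\in\mathcal B_C\}$, the primitive being unique, $\int_a^bf=F(b)-F(a)$. Note $G$ is absolutely continuous and of bounded variation. For $h\in\mathcal A_C$ with primitive $H$ and $g$ of bounded variation, $\int_{-\infty}^\infty hg=H(\infty)g(\infty)-\int_{-\infty}^\infty H\,dg$ (Henstock–Stieltjes). For $f\in\mathcal A_C$ with primitive $F$, $f(x-\cdot)$ is the element of $\mathcal A_C$ with primitive $y\mapsto F(\infty)-F(x-y)$, and for $G$ of bounded variation $f*G(x)=\int_{-\infty}^\infty f(x-y)G(y)\,dy$ is the product integral of $f(x-\cdot)$ and $G$. *)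

(* Defs.v *)
From Stdlib Require Import Reals Lra List.
Open Scope R_scope.

Definition lim_pinf (F : R -> R) (l : R) : Prop :=
  forall eps, 0 < eps -> exists M, forall x, M < x -> Rabs (F x - l) < eps.
Definition lim_minf (F : R -> R) (l : R) : Prop :=
  forall eps, 0 < eps -> exists M, forall x, x < M -> Rabs (F x - l) < eps.

Definition C0bar (F : R -> R) : Prop :=
  continuity F /\ (exists l, lim_pinf F l) /\ (exists l, lim_minf F l).

Definition in_BC (F : R -> R) : Prop := C0bar F /\ lim_minf F 0.

(* a division is a list of (left endpoint, right endpoint, tag) *)
Fixpoint chain (a b : R) (l : list (R * R * R)) : Prop :=
  match l with
  | nil => a = b
  | (u, v, _) :: l' => u = a /\ u < v /\ chain v b l'
  end.

Definition st_sum (H G : R -> R) (l : list (R * R * R)) : R :=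
  fold_right (fun p s => let '(u, v, t) := p in H t * (G v - G u) + s) 0 l.

Definition henstock_fine (delta : R -> R) (l : list (R * R * R)) : Prop :=
  forall u v t, In (u, v, t) l ->
    u <= t <= v /\ t - delta t < u /\ v < t + delta t.

Definition mcshane_fine (a b : R) (delta : R -> R) (l : list (R * R * R)) : Prop :=
  forall u v t, In (u, v, t) l ->
    a <= t <= b /\ t - delta t < u /\ v < t + delta t.

Definition HS_int (H G : R -> R) (a b I : R) : Prop :=
  forall eps, 0 < eps -> exists delta : R -> R, (forall x, 0 < delta x) /\
    forall l, chain a b l -> henstock_fine delta l ->
      Rabs (st_sum H G l - I) < eps.

(* McShane integral over [a,b] (= Lebesgue integral on compact intervals) *)
Definition McS_int (g : R -> R) (a b I : R) : Prop :=
  forall eps, 0 < eps -> exists delta : R -> R, (forall x, 0 < delta x) /\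
    forall l, chain a b l -> mcshane_fine a b delta l ->
      Rabs (st_sum g (fun x => x) l - I) < eps.

Definition HS_int_R (H G : R -> R) (I : R) : Prop :=
  (forall a b, a <= b -> exists J, HS_int H G a b J) /\
  forall eps, 0 < eps -> exists M, forall a b J,
    a < - M -> M < b -> HS_int H G a b J -> Rabs (J - I) < eps.

Definition L1 (g : R -> R) : Prop :=
  (forall a b, a <= b -> exists J, McS_int g a b J) /\
  exists B, forall a b J, a <= b -> McS_int (fun y => Rabs (g y)) a b J -> J <= B.

Definition Leb_int_R (g : R -> R) (I : R) : Prop :=
  L1 g /\
  forall eps, 0 < eps -> exists M, forall a b J,
    a < - M -> M < b -> McS_int g a b J -> Rabs (J - I) < eps.

Definition Leb_int_lower (g : R -> R) (x I : R) : Prop :=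
  forall eps, 0 < eps -> exists M, forall a J,
    a < - M -> a <= x -> McS_int g a x J -> Rabs (J - I) < eps.

(* f * G (x) = v, where f in A_C is given through its primitive F in B_C:
   the product integral of f(x - .) (primitive y |-> F(oo) - F(x-y)) and G,
   i.e.  H(oo) G(oo) - int_R H dG  with H(oo) = F(oo). *)
Definition conv_AC_BV (F G : R -> R) (x v : R) : Prop :=
  exists Finf Ginf, lim_pinf F Finf /\ lim_pinf G Ginf /\
    HS_int_R (fun y => Finf - F (x - y)) G (Finf * Ginf - v).

(* Main.v *)
Require Import Defs.
From Stdlib Require Import Reals Lra Lia List.
From Stdlib Require Import IndefiniteDescription.
Open Scope R_scope.


Fixpoint sumf (f : R -> R -> R -> R) (l : list (R*R*R)) : R :=
  match l with nil => 0 | (u,v,t)::l' => f u v t + sumf f l' end.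

Lemma st_sum_sumf H G l : st_sum H G l = sumf (fun u v t => H t * (G v - G u)) l.
Proof. induction l as [|[[u v] t] l IH]; simpl; [reflexivity| rewrite IH; reflexivity]. Qed.

Lemma sumf_app f l1 l2 : sumf f (l1 ++ l2) = sumf f l1 + sumf f l2.
Proof. induction l1 as [|[[u v] t] l IH]; simpl; [lra| rewrite IH; lra]. Qed.

Lemma sumf_ext f g l : (forall u v t, In (u,v,t) l -> f u v t = g u v t) -> sumf f l = sumf g l.
Proof. induction l as [|[[u v] t] l IH]; simpl; intros H; [lra|].
  rewrite (H u v t (or_introl eq_refl)), IH; auto. Qed.

Lemma sumf_le f g l : (forall u v t, In (u,v,t) l -> f u v t <= g u v t) -> sumf f l <= sumf g l.
Proof. induction l as [|[[u v] t] l IH]; simpl; intros H; [lra|].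
  pose proof (H u v t (or_introl eq_refl)). pose proof (IH (fun a b c h => H a b c (or_intror h))). lra. Qed.

Lemma sumf_plus f g l : sumf (fun u v t => f u v t + g u v t) l = sumf f l + sumf g l.
Proof. induction l as [|[[u v] t] l IH]; simpl; [lra| rewrite IH; lra]. Qed.

Lemma sumf_scal c f l : sumf (fun u v t => c * f u v t) l = c * sumf f l.
Proof. induction l as [|[[u v] t] l IH]; simpl; [lra| rewrite IH; lra]. Qed.

Lemma sumf_abs f l : Rabs (sumf f l) <= sumf (fun u v t => Rabs (f u v t)) l.
Proof. induction l as [|[[u v] t] l IH]; simpl; [rewrite Rabs_R0; lra|].
  eapply Rle_trans; [apply Rabs_triang| lra]. Qed.

Lemma chain_le a b l : chain a b l -> a <= b.
Proof. revert a; induction l as [|[[u v] t] l IH]; simpl; intros a H; [lra|].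
  destruct H as [-> [H1 H2]]. apply IH in H2; lra. Qed.

Lemma chain_in a b l u v t : chain a b l -> In (u,v,t) l -> a <= u /\ u < v /\ v <= b.
Proof. revert a; induction l as [|[[u' v'] t'] l IH]; simpl; intros a H Hi; [contradiction|].
  destruct H as [-> [H1 H2]]. destruct Hi as [Hi|Hi].
  - inversion Hi; subst. apply chain_le in H2; lra.
  - destruct (IH _ H2 Hi); lra. Qed.

Lemma chain_app a b c l1 l2 : chain a b l1 -> chain b c l2 -> chain a c (l1 ++ l2).
Proof. revert a; induction l1 as [|[[u v] t] l IH]; simpl; intros a H1 H2.
  - subst; auto.
  - destruct H1 as [-> [Hl Hr]]. split; [reflexivity|split; [auto| eapply IH; eauto]]. Qed.

Lemma telescope P a b l : chain a b l -> sumf (fun u v t => P v - P u) l = P b - P a.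
Proof. revert a; induction l as [|[[u v] t] l IH]; simpl; intros a H.
  - subst; lra.
  - destruct H as [-> [Hl Hr]]. rewrite (IH _ Hr); lra. Qed.

Lemma choiceR {A} (P : R -> A -> Prop) : (forall x, exists a, P x a) -> exists f, forall x, P x (f x).
Proof. intros H. exists (fun x => proj1_sig (constructive_indefinite_description _ (H x))).
  intros x. exact (proj2_sig (constructive_indefinite_description _ (H x))). Qed.
Lemma choiceN {A} (P : nat -> A -> Prop) : (forall x, exists a, P x a) -> exists f, forall x, P x (f x).
Proof. intros H. exists (fun x => proj1_sig (constructive_indefinite_description _ (H x))).
  intros x. exact (proj2_sig (constructive_indefinite_description _ (H x))). Qed.

Lemma cousin (d : R -> R) a b : (forall x, 0 < d x) -> a <= b ->
  exists l, chain a b l /\ henstock_fine d l.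
Proof.
  intros Hd Hab.
  set (S := fun x => a <= x <= b /\ exists l, chain a x l /\ henstock_fine d l).
  assert (Hb : bound S). { exists b. intros x [Hx _]; lra. }
  assert (Hne : exists x, S x). { exists a. split; [lra|]. exists nil. split; [reflexivity|].
    intros u v t []. }
  destruct (completeness S Hb Hne) as [c [Hub Hlub]].
  assert (Hac : a <= c).
  { apply Hub. split; [lra|]. exists nil. split; [reflexivity| intros u v t []]. }
  assert (Hcb : c <= b) by (apply Hlub; intros x [Hx _]; lra).
  assert (Hx : exists x, S x /\ c - d c < x).
  { apply Classical_Prop.NNPP; intros Hn. assert (c <= c - d c).
    { apply Hlub. intros x Sx. apply Rnot_lt_le. intros Hlt. apply Hn. eauto. }
    specialize (Hd c); lra. }
  destruct Hx as [x [[Hx1 [l [Hl Hf]]] Hxc]].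
  assert (Hxc' : x <= c) by (apply Hub; split; [lra| eauto]).
  assert (Sc : exists l, chain a c l /\ henstock_fine d l).
  { destruct (Req_dec x c) as [E|E].
    - subst; eauto.
    - exists (l ++ (x,c,c)::nil). split.
      + eapply chain_app; eauto. simpl. repeat split; lra.
      + intros u v t Hi. apply in_app_or in Hi. destruct Hi as [Hi|[Hi|[]]]; [apply Hf; auto|].
        injection Hi as <- <- <-. specialize (Hd c); repeat split; lra. }
  destruct (Rle_lt_or_eq_dec c b Hcb) as [Hlt|Heq]; [|subst; auto].
  exfalso. destruct Sc as [l2 [Hl2 Hf2]].
  set (c' := Rmin b (c + d c / 2)).
  assert (Hc'1 : c < c') by (unfold c'; specialize (Hd c); apply Rmin_glb_lt; lra).
  assert (Hc'2 : c' <= c + d c / 2) by apply Rmin_r.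
  assert (Hc'3 : c' <= b) by apply Rmin_l.
  assert (S c').
  { split; [lra|]. exists (l2 ++ (c,c',c)::nil). split.
    - eapply chain_app; eauto. simpl. repeat split; lra.
    - intros u v t Hi. apply in_app_or in Hi. destruct Hi as [Hi|[Hi|[]]]; [apply Hf2; auto|].
      injection Hi as <- <- <-. specialize (Hd c); repeat split; lra. }
  apply Hub in H. lra.
Qed.

Lemma hen_mcs a b d l : chain a b l -> henstock_fine d l -> mcshane_fine a b d l.
Proof. intros Hc Hf u v t Hi. destruct (Hf u v t Hi) as [H1 [H2 H3]].
  destruct (chain_in a b l u v t Hc Hi). repeat split; lra. Qed.

Lemma cousin_mcs (d : R -> R) a b : (forall x, 0 < d x) -> a <= b ->
  exists l, chain a b l /\ mcshane_fine a b d l.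
Proof. intros Hd Hab. destruct (cousin d a b Hd Hab) as [l [H1 H2]]. exists l; split; auto.
  apply hen_mcs; auto. Qed.

Lemma mcs_fine_mono a b (d1 d2 : R -> R) l : (forall x, d1 x <= d2 x) -> mcshane_fine a b d1 l -> mcshane_fine a b d2 l.
Proof. intros H Hf u v t Hi. destruct (Hf u v t Hi) as [H1 [H2 H3]]. specialize (H t). repeat split; lra. Qed.

Lemma hen_fine_mono (d1 d2 : R -> R) l : (forall x, d1 x <= d2 x) -> henstock_fine d1 l -> henstock_fine d2 l.
Proof. intros H Hf u v t Hi. destruct (Hf u v t Hi) as [H1 [H2 H3]]. specialize (H t). repeat split; lra. Qed.

Lemma mcs_fine_app a b d l1 l2 : mcshane_fine a b d l1 -> mcshane_fine a b d l2 -> mcshane_fine a b d (l1 ++ l2).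
Proof. intros H1 H2 u v t Hi. apply in_app_or in Hi; destruct Hi; auto. Qed.

Lemma mcs_fine_widen a b a' b' d l : a' <= a -> b <= b' -> mcshane_fine a b d l -> mcshane_fine a' b' d l.
Proof. intros Ha Hb Hf u v t Hi. destruct (Hf u v t Hi) as [H1 [H2 H3]]. repeat split; lra. Qed.

Lemma min_gauge (d1 d2 : R -> R) : (forall x, 0 < d1 x) -> (forall x, 0 < d2 x) ->
  (forall x, 0 < Rmin (d1 x) (d2 x)) /\ (forall x, Rmin (d1 x) (d2 x) <= d1 x) /\ (forall x, Rmin (d1 x) (d2 x) <= d2 x).
Proof. intros H1 H2; repeat split; intros x; [apply Rmin_glb_lt; auto| apply Rmin_l| apply Rmin_r]. Qed.


Lemma st_id g l : st_sum g (fun x => x) l = sumf (fun u v t => g t * (v - u)) l.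
Proof. apply st_sum_sumf. Qed.

Lemma eps_eq x y : (forall e, 0 < e -> Rabs (x - y) < e) -> x = y.
Proof. intros H. destruct (Req_dec x y) as [|n]; auto. exfalso.
  assert (0 < Rabs (x - y)) by (apply Rabs_pos_lt; lra). specialize (H _ H0); lra. Qed.

Lemma eps_le x y : (forall e, 0 < e -> x <= y + e) -> x <= y.
Proof. intros H. apply Rnot_lt_le; intros Hlt. specialize (H ((x - y)/2)). lra. Qed.

Lemma mcs_unique g a b J1 J2 : a <= b -> McS_int g a b J1 -> McS_int g a b J2 -> J1 = J2.
Proof. intros Hab H1 H2. apply eps_eq. intros e He.
  destruct (H1 (e/2)) as [d1 [Hd1 P1]]; [lra|]. destruct (H2 (e/2)) as [d2 [Hd2 P2]]; [lra|].
  destruct (min_gauge d1 d2 Hd1 Hd2) as [Hm [Hm1 Hm2]].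
  destruct (cousin_mcs _ a b Hm Hab) as [l [Hc Hf]].
  specialize (P1 l Hc (mcs_fine_mono _ _ _ _ _ Hm1 Hf)). specialize (P2 l Hc (mcs_fine_mono _ _ _ _ _ Hm2 Hf)).
  assert (Rabs (J1 - J2) <= Rabs (st_sum g (fun x => x) l - J2) + Rabs (st_sum g (fun x => x) l - J1)).
  { replace (J1 - J2) with ((st_sum g (fun x => x) l - J2) - (st_sum g (fun x => x) l - J1)) by ring.
    eapply Rle_trans; [apply Rabs_triang|]. rewrite Rabs_Ropp. lra. }
  lra. Qed.

Lemma hs_unique H G a b J1 J2 : a <= b -> HS_int H G a b J1 -> HS_int H G a b J2 -> J1 = J2.
Proof. intros Hab H1 H2. apply eps_eq. intros e He.
  destruct (H1 (e/2)) as [d1 [Hd1 P1]]; [lra|]. destruct (H2 (e/2)) as [d2 [Hd2 P2]]; [lra|].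
  destruct (min_gauge d1 d2 Hd1 Hd2) as [Hm [Hm1 Hm2]].
  destruct (cousin _ a b Hm Hab) as [l [Hc Hf]].
  specialize (P1 l Hc (hen_fine_mono _ _ _ Hm1 Hf)). specialize (P2 l Hc (hen_fine_mono _ _ _ Hm2 Hf)).
  assert (Rabs (J1 - J2) <= Rabs (st_sum H G l - J2) + Rabs (st_sum H G l - J1)).
  { replace (J1 - J2) with ((st_sum H G l - J2) - (st_sum H G l - J1)) by ring.
    eapply Rle_trans; [apply Rabs_triang|]. rewrite Rabs_Ropp. lra. }
  lra. Qed.

Lemma mcs_plus f h a b J1 J2 : McS_int f a b J1 -> McS_int h a b J2 ->
  McS_int (fun x => f x + h x) a b (J1 + J2).
Proof. intros H1 H2 e He.
  destruct (H1 (e/2)) as [d1 [Hd1 P1]]; [lra|]. destruct (H2 (e/2)) as [d2 [Hd2 P2]]; [lra|].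
  destruct (min_gauge d1 d2 Hd1 Hd2) as [Hm [Hm1 Hm2]].
  exists (fun x => Rmin (d1 x) (d2 x)); split; auto. intros l Hc Hf.
  specialize (P1 l Hc (mcs_fine_mono _ _ _ _ _ Hm1 Hf)). specialize (P2 l Hc (mcs_fine_mono _ _ _ _ _ Hm2 Hf)).
  rewrite !st_id in *.
  rewrite (sumf_ext _ (fun u v t => f t * (v - u) + h t * (v - u))) by (intros; ring).
  rewrite sumf_plus.
  replace (sumf (fun u v t => f t * (v - u)) l + sumf (fun u v t => h t * (v - u)) l - (J1 + J2))
    with ((sumf (fun u v t => f t * (v - u)) l - J1) + (sumf (fun u v t => h t * (v - u)) l - J2)) by ring.
  eapply Rle_lt_trans; [apply Rabs_triang|]. lra. Qed.

Lemma mcs_scal c f a b J : McS_int f a b J -> McS_int (fun x => c * f x) a b (c * J).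
Proof. intros H1 e He.
  destruct (H1 (e / (Rabs c + 1))) as [d1 [Hd1 P1]].
  { apply Rdiv_lt_0_compat; [lra| pose proof (Rabs_pos c); lra]. }
  exists d1; split; auto. intros l Hc Hf. specialize (P1 l Hc Hf).
  rewrite st_id in *.
  rewrite (sumf_ext _ (fun u v t => c * (f t * (v - u)))) by (intros; ring).
  rewrite sumf_scal. rewrite <- Rmult_minus_distr_l, Rabs_mult.
  pose proof (Rabs_pos c).
  apply Rle_lt_trans with (Rabs c * (e / (Rabs c + 1))).
  { apply Rmult_le_compat_l; lra. }
  apply Rlt_le_trans with ((Rabs c + 1) * (e / (Rabs c + 1))).
  { apply Rmult_lt_compat_r; [apply Rdiv_lt_0_compat; lra| lra]. }
  right; field; lra. Qed.

Lemma mcs_ext f h a b J : (forall x, a <= x <= b -> f x = h x) -> McS_int f a b J -> McS_int h a b J.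
Proof. intros E H1 e He. destruct (H1 e He) as [d [Hd P]]. exists d; split; auto.
  intros l Hc Hf. specialize (P l Hc Hf). rewrite st_id in *.
  rewrite (sumf_ext _ (fun u v t => f t * (v - u))); auto.
  intros u v t Hi. destruct (Hf u v t Hi) as [Ht _]. rewrite E; auto. Qed.

Lemma mcs_mono f h a b J1 J2 : a <= b -> (forall x, a <= x <= b -> f x <= h x) ->
  McS_int f a b J1 -> McS_int h a b J2 -> J1 <= J2.
Proof. intros Hab Hle H1 H2. apply eps_le; intros e He.
  destruct (H1 (e/2)) as [d1 [Hd1 P1]]; [lra|]. destruct (H2 (e/2)) as [d2 [Hd2 P2]]; [lra|].
  destruct (min_gauge d1 d2 Hd1 Hd2) as [Hm [Hm1 Hm2]].
  destruct (cousin_mcs _ a b Hm Hab) as [l [Hc Hf]].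
  specialize (P1 l Hc (mcs_fine_mono _ _ _ _ _ Hm1 Hf)). specialize (P2 l Hc (mcs_fine_mono _ _ _ _ _ Hm2 Hf)).
  rewrite st_id in *.
  assert (sumf (fun u v t => f t * (v - u)) l <= sumf (fun u v t => h t * (v - u)) l).
  { apply sumf_le. intros u v t Hi. destruct (Hf u v t Hi) as [Ht _].
    destruct (chain_in _ _ _ _ _ _ Hc Hi). apply Rmult_le_compat_r; [lra| auto]. }
  apply Rabs_def2 in P1. apply Rabs_def2 in P2. lra. Qed.

Lemma mcs_add f a b c J1 J2 J : a <= b -> b <= c -> McS_int f a b J1 -> McS_int f b c J2 -> McS_int f a c J ->
  J = J1 + J2.
Proof. intros Hab Hbc H1 H2 H. apply eps_eq; intros e He.
  destruct (H1 (e/3)) as [d1 [Hd1 P1]]; [lra|]. destruct (H2 (e/3)) as [d2 [Hd2 P2]]; [lra|].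
  destruct (H (e/3)) as [d [Hd P]]; [lra|].
  destruct (min_gauge d1 d2 Hd1 Hd2) as [Hm [Hm1 Hm2]].
  destruct (min_gauge _ d Hm Hd) as [Hn [Hn1 Hn2]].
  destruct (cousin_mcs _ a b Hn Hab) as [l1 [Hc1 Hf1]].
  destruct (cousin_mcs _ b c Hn Hbc) as [l2 [Hc2 Hf2]].
  assert (Hf : mcshane_fine a c (fun x => Rmin (Rmin (d1 x) (d2 x)) (d x)) (l1 ++ l2)).
  { apply mcs_fine_app; [apply (mcs_fine_widen a b) | apply (mcs_fine_widen b c)]; auto; lra. }
  specialize (P _ (chain_app _ _ _ _ _ Hc1 Hc2) (mcs_fine_mono _ _ _ _ _ Hn2 Hf)).
  assert (Q1 : forall x, Rmin (Rmin (d1 x) (d2 x)) (d x) <= d1 x) by (intros x; eapply Rle_trans; [apply Hn1| apply Hm1]).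
  assert (Q2 : forall x, Rmin (Rmin (d1 x) (d2 x)) (d x) <= d2 x) by (intros x; eapply Rle_trans; [apply Hn1| apply Hm2]).
  specialize (P1 _ Hc1 (mcs_fine_mono _ _ _ _ _ Q1 Hf1)).
  specialize (P2 _ Hc2 (mcs_fine_mono _ _ _ _ _ Q2 Hf2)).
  rewrite st_id, sumf_app in P. rewrite st_id in P1, P2.
  apply Rabs_def2 in P1. apply Rabs_def2 in P2. apply Rabs_def2 in P. apply Rabs_def1; lra. Qed.

Fixpoint gmin (ds : nat -> R -> R) (n : nat) (x : R) : R :=
  match n with O => ds O x | S k => Rmin (gmin ds k x) (ds (S k) x) end.

Lemma gmin_pos ds n : (forall k x, 0 < ds k x) -> forall x, 0 < gmin ds n x.
Proof. intros H x; induction n; simpl; auto. apply Rmin_glb_lt; auto. Qed.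

Lemma gmin_le ds n k : (k <= n)%nat -> forall x, gmin ds n x <= ds k x.
Proof. intros Hk x. induction n.
  - inversion Hk; simpl; lra.
  - inversion Hk; subst; simpl; [apply Rmin_r|]. eapply Rle_trans; [apply Rmin_l| auto]. Qed.

Lemma mcs_cauchy f a b : a <= b ->
  (forall e, 0 < e -> exists d, (forall x, 0 < d x) /\ forall l1 l2,
     chain a b l1 -> mcshane_fine a b d l1 -> chain a b l2 -> mcshane_fine a b d l2 ->
     Rabs (st_sum f (fun x => x) l1 - st_sum f (fun x => x) l2) < e) ->
  exists J, McS_int f a b J.
Proof.
  intros Hab HC.
  destruct (choiceN (fun n d => (forall x, 0 < d x) /\ forall l1 l2,
     chain a b l1 -> mcshane_fine a b d l1 -> chain a b l2 -> mcshane_fine a b d l2 ->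
     Rabs (st_sum f (fun x => x) l1 - st_sum f (fun x => x) l2) < / INR (S n))) as [ds Hds].
  { intros n. apply HC. apply Rinv_0_lt_compat, lt_0_INR; lia. }
  assert (Hp : forall k x, 0 < ds k x) by (intros k; apply Hds).
  destruct (choiceN (fun n l => chain a b l /\ mcshane_fine a b (gmin ds n) l)) as [ls Hls].
  { intros n. apply cousin_mcs; auto. apply gmin_pos; auto. }
  set (s := fun n => st_sum f (fun x => x) (ls n)).
  assert (Hs : forall k n, (k <= n)%nat -> forall l, chain a b l -> mcshane_fine a b (ds k) l ->
     Rabs (s n - st_sum f (fun x => x) l) < / INR (S k)).
  { intros k n Hkn l Hc Hf. apply (proj2 (Hds k)); auto; try apply Hls.
    eapply mcs_fine_mono; [| apply Hls]. apply gmin_le; auto. }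
  assert (Hcc : Cauchy_crit s).
  { intros e He. destruct (archimed_cor1 e He) as [N [HN1 HN2]].
    exists N. intros n m Hn Hm. unfold Rdist.
    eapply Rlt_trans; [apply (Hs N n); [lia| apply Hls| ] |].
    - eapply mcs_fine_mono; [| apply Hls]. apply gmin_le; auto.
    - eapply Rle_lt_trans; [| apply HN1]. apply Rinv_le_contravar; [apply lt_0_INR; lia|].
      rewrite S_INR; lra. }
  destruct (R_complete s Hcc) as [L HL].
  exists L. intros e He.
  destruct (archimed_cor1 (e/2)) as [N [HN1 HN2]]; [lra|].
  destruct (HL (e/2)) as [N2 HN]; [lra|].
  exists (ds N). split; auto. intros l Hc Hf.
  specialize (HN (max N N2) (Nat.le_max_r _ _)). unfold Rdist in HN.
  specialize (Hs N (max N N2) (Nat.le_max_l _ _) l Hc Hf).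
  assert (/ INR (S N) <= / INR N).
  { apply Rinv_le_contravar; [apply lt_0_INR; lia|]. rewrite S_INR; lra. }
  replace (st_sum f (fun x => x) l - L) with (-(s (max N N2) - st_sum f (fun x => x) l) + (s (max N N2) - L)) by ring.
  eapply Rle_lt_trans; [apply Rabs_triang|]. rewrite Rabs_Ropp. lra.
Qed.

Lemma mcs_prim f : (forall a b, a <= b -> exists J, McS_int f a b J) ->
  exists P, forall u v, u <= v -> McS_int f u v (P v - P u).
Proof.
  intros H.
  destruct (choiceR (fun a Jb => forall b, a <= b -> McS_int f a b (Jb b))) as [Jf HJ].
  { intros a. destruct (choiceR (fun b J => a <= b -> McS_int f a b J)) as [Jb HJb].
    - intros b. destruct (Rle_dec a b) as [h|h].
      + destruct (H a b h) as [J HJ]. exists J; auto.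
      + exists 0; intros; contradiction.
    - exists Jb; auto. }
  assert (Add : forall a b c, a <= b -> b <= c -> Jf a c = Jf a b + Jf b c).
  { intros a b c H1 H2. eapply (mcs_add f a b c); [exact H1|exact H2|apply HJ; lra|apply HJ; lra|apply HJ; lra]. }
  exists (fun x => match Rle_dec 0 x with left _ => Jf 0 x | right _ => - Jf x 0 end).
  intros u v Huv. destruct (Rle_dec 0 v) as [h1|h1]; destruct (Rle_dec 0 u) as [h2|h2].
  - rewrite (Add 0 u v) by lra. replace (Jf 0 u + Jf u v - Jf 0 u) with (Jf u v) by ring. auto.
  - replace (Jf 0 v - - Jf u 0) with (Jf u 0 + Jf 0 v) by ring.
    rewrite <- Add by lra. auto.
  - lra.
  - rewrite (Add u v 0) by lra. replace (- Jf v 0 - - (Jf u v + Jf v 0)) with (Jf u v) by ring. auto.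
Qed.


Fixpoint chain4 (a b : R) (l : list (R*R*R*R)) : Prop :=
  match l with nil => a = b | (u,v,s,t)::l' => u = a /\ u < v /\ chain4 v b l' end.
Fixpoint sum4 (f : R -> R -> R -> R -> R) (l : list (R*R*R*R)) : R :=
  match l with nil => 0 | (u,v,s,t)::l' => f u v s t + sum4 f l' end.
Definition p1 (x : R*R*R*R) : R*R*R := let '(u,v,s,t) := x in (u,v,s).
Definition p2 (x : R*R*R*R) : R*R*R := let '(u,v,s,t) := x in (u,v,t).

Lemma sum4_p1 f l : sumf f (map p1 l) = sum4 (fun u v s t => f u v s) l.
Proof. induction l as [|[[[u v] s] t] l IH]; simpl; [reflexivity| rewrite IH; reflexivity]. Qed.
Lemma sum4_p2 f l : sumf f (map p2 l) = sum4 (fun u v s t => f u v t) l.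
Proof. induction l as [|[[[u v] s] t] l IH]; simpl; [reflexivity| rewrite IH; reflexivity]. Qed.
Lemma chain4_p1 a b l : chain4 a b l -> chain a b (map p1 l).
Proof. revert a; induction l as [|[[[u v] s] t] l IH]; simpl; intros a H; auto.
  destruct H as [H1 [H2 H3]]; auto. Qed.
Lemma chain4_p2 a b l : chain4 a b l -> chain a b (map p2 l).
Proof. revert a; induction l as [|[[[u v] s] t] l IH]; simpl; intros a H; auto.
  destruct H as [H1 [H2 H3]]; auto. Qed.
Lemma sum4_le f g l : (forall u v s t, In (u,v,s,t) l -> f u v s t <= g u v s t) -> sum4 f l <= sum4 g l.
Proof. induction l as [|[[[u v] s] t] l IH]; simpl; intros H; [lra|].
  pose proof (H u v s t (or_introl eq_refl)). pose proof (IH (fun a b c d h => H a b c d (or_intror h))). lra. Qed.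
Lemma sum4_minus f g l : sum4 f l - sum4 g l = sum4 (fun u v s t => f u v s t - g u v s t) l.
Proof. induction l as [|[[[u v] s] t] l IH]; simpl; [lra| rewrite <- IH; lra]. Qed.
Lemma sum4_abs f l : Rabs (sum4 f l) <= sum4 (fun u v s t => Rabs (f u v s t)) l.
Proof. induction l as [|[[[u v] s] t] l IH]; simpl; [rewrite Rabs_R0; lra|].
  eapply Rle_trans; [apply Rabs_triang| lra]. Qed.
Lemma sum4_scal c f l : sum4 (fun u v s t => c * f u v s t) l = c * sum4 f l.
Proof. induction l as [|[[[u v] s] t] l IH]; simpl; [lra| rewrite IH; lra]. Qed.
Lemma telescope4 P a b l : chain4 a b l -> sum4 (fun u v s t => P v - P u) l = P b - P a.
Proof. revert a; induction l as [|[[[u v] s] t] l IH]; simpl; intros a H.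
  - subst; lra.
  - destruct H as [-> [Hl Hr]]. rewrite (IH _ Hr); lra. Qed.
Lemma chain4_in a b l u v s t : chain4 a b l -> In (u,v,s,t) l -> u < v.
Proof. revert a; induction l as [|[[[u' v'] s'] t'] l IH]; simpl; intros a H Hi; [contradiction|].
  destruct H as [-> [H1 H2]]. destruct Hi as [Hi|Hi].
  - inversion Hi; subst; auto.
  - eapply IH; eauto. Qed.

Lemma chain_nil_r a l : chain a a l -> l = nil.
Proof. destruct l as [|[[u v] t] l]; simpl; auto. intros [-> [H1 H2]]. apply chain_le in H2; lra. Qed.

Lemma refine_n : forall n D1 D2 a b, (length D1 + length D2 <= n)%nat -> chain a b D1 -> chain a b D2 ->
  exists P4, chain4 a b P4 /\
   (forall u v s t, In (u,v,s,t) P4 -> (exists u1 v1, In (u1,v1,s) D1 /\ u1 <= u /\ v <= v1) /\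
                                       (exists u2 v2, In (u2,v2,t) D2 /\ u2 <= u /\ v <= v2)) /\
   (forall H P, st_sum H P D1 = sum4 (fun u v s t => H s * (P v - P u)) P4) /\
   (forall H P, st_sum H P D2 = sum4 (fun u v s t => H t * (P v - P u)) P4).
Proof.
  induction n as [|n IH]; intros D1 D2 a b Hn H1 H2.
  - destruct D1; [|simpl in Hn; lia]. destruct D2; [|simpl in Hn; lia].
    exists nil. simpl in *. repeat split; auto; intros; contradiction.
  - destruct D1 as [|[[u1 v1] s] D1'].
    { simpl in H1; subst. apply chain_nil_r in H2; subst. exists nil; simpl; repeat split; auto; intros; contradiction. }
    destruct D2 as [|[[u2 v2] t] D2'].
    { simpl in H2; subst. apply chain_nil_r in H1; discriminate. }
    simpl in H1, H2, Hn. destruct H1 as [-> [Hu1 Hc1]]. destruct H2 as [-> [Hu2 Hc2]].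
    destruct (total_order_T v1 v2) as [[Hlt|Heq]|Hgt].
    + assert (Hc2' : chain v1 b ((v1,v2,t)::D2')) by (simpl; auto).
      destruct (IH D1' ((v1,v2,t)::D2') v1 b) as [R [HR1 [HR2 [HR3 HR4]]]]; auto. simpl; lia.
      exists ((a,v1,s,t)::R). split; [simpl; auto|]. split; [|split].
      * intros u v s0 t0 [Hi|Hi].
        -- injection Hi as <- <- <- <-. split; [exists a, v1| exists a, v2]; simpl; repeat split; auto; lra.
        -- destruct (HR2 _ _ _ _ Hi) as [[x1 [y1 [Hx1 Hx2]]] [x2 [y2 [[Hy|Hy] Hy2]]]].
           ++ split; [exists x1, y1; simpl; auto|]. injection Hy as E1 E2 E3; subst x2 y2 t0. exists a, v2; simpl; split; auto.
              assert (v1 <= u) by lra. pose proof (chain4_in _ _ _ _ _ _ _ HR1 Hi). lra.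
           ++ split; [exists x1, y1; simpl; auto| exists x2, y2; simpl; auto].
      * intros H P. simpl. rewrite HR3. reflexivity.
      * intros H P. simpl. rewrite <- HR4. simpl. ring.
    + subst v2. destruct (IH D1' D2' v1 b) as [R [HR1 [HR2 [HR3 HR4]]]]; auto. lia.
      exists ((a,v1,s,t)::R). split; [simpl; auto|]. split; [|split].
      * intros u v s0 t0 [Hi|Hi].
        -- injection Hi as <- <- <- <-. split; [exists a, v1| exists a, v1]; simpl; repeat split; auto; lra.
        -- destruct (HR2 _ _ _ _ Hi) as [[x1 [y1 [Hx1 Hx2]]] [x2 [y2 [Hy Hy2]]]].
           split; [exists x1, y1; simpl; auto| exists x2, y2; simpl; auto].
      * intros H P. simpl. rewrite HR3. reflexivity.
      * intros H P. simpl. rewrite HR4. reflexivity.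
    + assert (Hc1' : chain v2 b ((v2,v1,s)::D1')) by (simpl; auto).
      destruct (IH ((v2,v1,s)::D1') D2' v2 b) as [R [HR1 [HR2 [HR3 HR4]]]]; auto. simpl; lia.
      exists ((a,v2,s,t)::R). split; [simpl; auto|]. split; [|split].
      * intros u v s0 t0 [Hi|Hi].
        -- injection Hi as <- <- <- <-. split; [exists a, v1| exists a, v2]; simpl; repeat split; auto; lra.
        -- destruct (HR2 _ _ _ _ Hi) as [[x1 [y1 [[Hx|Hx] Hx2]]] [x2 [y2 [Hy Hy2]]]].
           ++ split; [|exists x2, y2; simpl; auto]. injection Hx as E1 E2 E3; subst x1 y1 s0. exists a, v1; simpl; split; auto.
              pose proof (chain4_in _ _ _ _ _ _ _ HR1 Hi). lra.
           ++ split; [exists x1, y1; simpl; auto| exists x2, y2; simpl; auto].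
      * intros H P. simpl. rewrite <- HR3. simpl. ring.
      * intros H P. simpl. rewrite HR4. reflexivity.
Qed.

Lemma refine D1 D2 a b : chain a b D1 -> chain a b D2 ->
  exists P4, chain4 a b P4 /\
   (forall u v s t, In (u,v,s,t) P4 -> (exists u1 v1, In (u1,v1,s) D1 /\ u1 <= u /\ v <= v1) /\
                                       (exists u2 v2, In (u2,v2,t) D2 /\ u2 <= u /\ v <= v2)) /\
   (forall H P, st_sum H P D1 = sum4 (fun u v s t => H s * (P v - P u)) P4) /\
   (forall H P, st_sum H P D2 = sum4 (fun u v s t => H t * (P v - P u)) P4).
Proof. apply (refine_n (length D1 + length D2)); auto. Qed.

Lemma refine_fine1 a b d D1 P4 : mcshane_fine a b d D1 ->
  (forall u v s t, In (u,v,s,t) P4 -> exists u1 v1, In (u1,v1,s) D1 /\ u1 <= u /\ v <= v1) ->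
  mcshane_fine a b d (map p1 P4).
Proof. intros Hf H u v s Hi. apply in_map_iff in Hi. destruct Hi as [[[[u' v'] s'] t'] [He Hi]].
  simpl in He. inversion He; subst. destruct (H _ _ _ _ Hi) as [u1 [v1 [Hi1 [Hu Hv]]]].
  destruct (Hf _ _ _ Hi1) as [X [Y Z]]. repeat split; lra. Qed.
Lemma refine_fine2 a b d D2 P4 : mcshane_fine a b d D2 ->
  (forall u v s t, In (u,v,s,t) P4 -> exists u2 v2, In (u2,v2,t) D2 /\ u2 <= u /\ v <= v2) ->
  mcshane_fine a b d (map p2 P4).
Proof. intros Hf H u v s Hi. apply in_map_iff in Hi. destruct Hi as [[[[u' v'] s'] t'] [He Hi]].
  simpl in He. inversion He; subst. destruct (H _ _ _ _ Hi) as [u1 [v1 [Hi1 [Hu Hv]]]].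
  destruct (Hf _ _ _ Hi1) as [X [Y Z]]. repeat split; lra. Qed.


Section SH.
Variables (g G : R -> R) (a b : R).
Hypothesis hP : forall u v, a <= u -> u <= v -> v <= b -> McS_int g u v (G v - G u).

Definition dd u v t := g t * (v - u) - (G v - G u).

Lemma repl (sg : R) : sg * sg = 1 -> forall d, (forall x, 0 < d x) ->
  forall l p q, chain p q l -> a <= p -> q <= b -> mcshane_fine a b d l -> forall eta, 0 < eta ->
  exists l', chain p q l' /\ mcshane_fine a b d l' /\
   Rabs (sumf (fun u v t => g t * (v - u)) l' -
         (sumf (fun u v t => g t * (v - u)) l - sg * sumf (fun u v t => Rmax (sg * dd u v t) 0) l)) < eta.
Proof.
  intros Hs d Hd l. induction l as [|[[u v] t] l IH]; intros p q Hc Hp Hq Hf eta He.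
  - exists nil. split; [exact Hc|]. split; [intros ? ? ? []|]. simpl.
    replace (0 - (0 - sg * 0)) with 0 by ring. rewrite Rabs_R0; auto.
  - simpl in Hc. destruct Hc as [-> [Huv Hc]].
    assert (Hvq := chain_le _ _ _ Hc).
    destruct (IH v q Hc ltac:(lra) Hq (fun a0 b0 c0 h => Hf a0 b0 c0 (or_intror h)) (eta/2) ltac:(lra))
      as [l1 [Hc1 [Hf1 Hl1]]].
    destruct (Rle_dec (sg * dd p v t) 0) as [Hn|Hn].
    + exists ((p,v,t)::l1). split; [simpl; auto|]. split.
      * intros u0 v0 t0 [Hi|Hi]; [apply Hf; left; auto| apply Hf1; auto].
      * simpl. rewrite Rmax_right by lra.
        replace (g t * (v - p) + sumf (fun u v t => g t * (v - u)) l1 -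
          (g t * (v - p) + sumf (fun u v t => g t * (v - u)) l - sg * (0 + sumf (fun u v t => Rmax (sg * dd u v t) 0) l)))
        with (sumf (fun u v t => g t * (v - u)) l1 -
          (sumf (fun u v t => g t * (v - u)) l - sg * sumf (fun u v t => Rmax (sg * dd u v t) 0) l)) by ring. lra.
    + destruct (hP p v Hp ltac:(lra) ltac:(lra) (eta/2) ltac:(lra)) as [d1 [Hd1 P1]].
      destruct (min_gauge d d1 Hd Hd1) as [Hm [Hm1 Hm2]].
      destruct (cousin_mcs _ p v Hm ltac:(lra)) as [m [Hcm Hfm]].
      specialize (P1 m Hcm (mcs_fine_mono _ _ _ _ _ Hm2 Hfm)).
      exists (m ++ l1). split; [eapply chain_app; eauto|]. split.
      * apply mcs_fine_app; auto. apply (mcs_fine_widen p v); [lra|lra|]. eapply mcs_fine_mono; [exact Hm1| exact Hfm].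
      * rewrite sumf_app. simpl. rewrite Rmax_left by lra. rewrite st_id in P1.
        unfold dd at 1.
        replace (sumf (fun u v t => g t * (v - u)) m + sumf (fun u v t => g t * (v - u)) l1 -
          (g t * (v - p) + sumf (fun u v t => g t * (v - u)) l -
           sg * (sg * (g t * (v - p) - (G v - G p)) + sumf (fun u v t => Rmax (sg * dd u v t) 0) l)))
        with ((sumf (fun u v t => g t * (v - u)) m - (G v - G p)) + (sumf (fun u v t => g t * (v - u)) l1 -
          (sumf (fun u v t => g t * (v - u)) l - sg * sumf (fun u v t => Rmax (sg * dd u v t) 0) l))
          + (sg * sg - 1) * (g t * (v - p) - (G v - G p))) by ring.
        rewrite Hs, Rminus_diag, Rmult_0_l, Rplus_0_r.
        eapply Rle_lt_trans; [apply Rabs_triang| lra].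
Qed.

Lemma abs_split x : Rabs x = Rmax x 0 + Rmax (- x) 0.
Proof. unfold Rmax. destruct (Rle_dec x 0); destruct (Rle_dec (-x) 0);
  [assert (x = 0) by lra; subst; rewrite Rabs_R0; lra | rewrite Rabs_left1 by lra; lra
  | rewrite Rabs_right by lra; lra | lra]. Qed.

Lemma saks_henstock : a <= b -> forall e, 0 < e -> exists d, (forall x, 0 < d x) /\
  forall l, chain a b l -> mcshane_fine a b d l -> sumf (fun u v t => Rabs (dd u v t)) l <= e.
Proof.
  intros Hab e He. destruct (hP a b ltac:(lra) Hab ltac:(lra) (e/4) ltac:(lra)) as [d [Hd P]].
  exists d; split; auto. intros l Hc Hf.
  assert (K : forall sg, sg * sg = 1 -> Rabs (sg * sumf (fun u v t => Rmax (sg * dd u v t) 0) l) <= e/2).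
  { intros sg Hs. apply eps_le. intros eta Heta.
    destruct (repl sg Hs d Hd l a b Hc ltac:(lra) ltac:(lra) Hf eta Heta) as [l' [Hc' [Hf' Hl']]].
    pose proof (P l Hc Hf) as P0. pose proof (P l' Hc' Hf') as P1. rewrite st_id in P0, P1.
    set (X := sg * sumf (fun u v t => Rmax (sg * dd u v t) 0) l) in *.
    set (S0 := sumf (fun u v t => g t * (v - u)) l) in *.
    set (S1 := sumf (fun u v t => g t * (v - u)) l') in *.
    apply Rabs_def2 in Hl'. apply Rabs_def2 in P0. apply Rabs_def2 in P1.
    apply Rlt_le, Rabs_def1; lra. }
  assert (Hpos : forall sg, 0 <= sumf (fun u v t => Rmax (sg * dd u v t) 0) l).
  { intros sg. clear. induction l as [|[[u v] t] l IH]; simpl; [lra|].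
    pose proof (Rmax_r (sg * dd u v t) 0). lra. }
  assert (E1 : 1 * 1 = 1) by ring. assert (E2 : -1 * -1 = 1) by ring.
  pose proof (K 1 E1) as K1. pose proof (K (-1) E2) as K2.
  rewrite Rmult_1_l, Rabs_right in K1 by (apply Rle_ge, Hpos).
  assert (Em : Rabs (-1) = 1) by (rewrite Rabs_left; lra).
  rewrite Rabs_mult, Em, Rmult_1_l, Rabs_right in K2 by (apply Rle_ge, Hpos).
  rewrite (sumf_ext _ (fun u v t => Rmax (1 * dd u v t) 0 + Rmax (-1 * dd u v t) 0)).
  - rewrite sumf_plus. lra.
  - intros. rewrite abs_split. f_equal; f_equal; ring.
Qed.
End SH.


Lemma cauchy_pinf P : (forall e, 0 < e -> exists A, forall u v, A <= u -> A <= v -> Rabs (P u - P v) < e) ->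
  exists l, lim_pinf P l.
Proof.
  intros HC.
  assert (Hc : Cauchy_crit (fun n => P (INR n))).
  { intros e He. destruct (HC e He) as [A HA]. destruct (INR_unbounded A) as [N HN].
    exists N. intros n m Hn Hm. unfold Rdist. apply HA; apply Rge_le; eapply Rge_trans;
      try (apply Rle_ge, le_INR; eassumption); lra. }
  destruct (R_complete _ Hc) as [l Hl]. exists l. intros e He.
  destruct (HC (e/2) ltac:(lra)) as [A HA]. destruct (Hl (e/2) ltac:(lra)) as [N HN].
  destruct (INR_unbounded A) as [N2 HN2].
  exists A. intros x Hx. set (n := max N N2).
  specialize (HN n (Nat.le_max_l _ _)). unfold Rdist in HN.
  assert (INR N2 <= INR n) by (apply le_INR, Nat.le_max_r).
  specialize (HA x (INR n) ltac:(lra) ltac:(lra)).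
  replace (P x - l) with ((P x - P (INR n)) + (P (INR n) - l)) by ring.
  eapply Rle_lt_trans; [apply Rabs_triang| lra].
Qed.

Lemma cauchy_minf P : (forall e, 0 < e -> exists A, forall u v, u <= A -> v <= A -> Rabs (P u - P v) < e) ->
  exists l, lim_minf P l.
Proof.
  intros HC. destruct (cauchy_pinf (fun x => P (- x))) as [l Hl].
  { intros e He. destruct (HC e He) as [A HA]. exists (- A). intros u v Hu Hv. apply HA; lra. }
  exists l. intros e He. destruct (Hl e He) as [M HM]. exists (- M). intros x Hx.
  replace x with (- - x) by ring. apply HM. lra.
Qed.

Section Gstuff.
Variables (g G : R -> R).
Hypothesis hg : L1 g.
Hypothesis hG : forall x, Leb_int_lower g x (G x).

Lemma primG u v : u <= v -> McS_int g u v (G v - G u).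
Proof.
  intros Huv. destruct (proj1 hg u v Huv) as [J HJ].
  replace (G v - G u) with J; auto. apply eps_eq. intros e He.
  destruct (hG u (e/2) ltac:(lra)) as [M1 HM1]. destruct (hG v (e/2) ltac:(lra)) as [M2 HM2].
  set (a0 := Rmin u (- Rabs M1 - Rabs M2 - 1)).
  assert (Ha1 : a0 <= u) by apply Rmin_l.
  assert (Ha2 : a0 <= - Rabs M1 - Rabs M2 - 1) by apply Rmin_r.
  pose proof (Rle_abs M1). pose proof (Rle_abs M2). pose proof (Rabs_pos M1). pose proof (Rabs_pos M2).
  destruct (proj1 hg a0 u Ha1) as [J1 HJ1]. destruct (proj1 hg a0 v ltac:(lra)) as [J2 HJ2].
  pose proof (mcs_add g a0 u v J1 J J2 Ha1 Huv HJ1 HJ HJ2) as E.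
  specialize (HM1 a0 J1 ltac:(lra) Ha1 HJ1). specialize (HM2 a0 J2 ltac:(lra) ltac:(lra) HJ2).
  apply Rabs_def2 in HM1. apply Rabs_def2 in HM2. apply Rabs_def1; lra.
Qed.

Lemma absg_int a b : a <= b -> exists J, McS_int (fun y => Rabs (g y)) a b J.
Proof.
  intros Hab. apply mcs_cauchy; auto. intros e He.
  destruct (saks_henstock g G a b (fun u v _ h _ => primG u v h) Hab (e/3) ltac:(lra)) as [d [Hd HSH]].
  exists d. split; auto. intros D1 D2 Hc1 Hf1 Hc2 Hf2.
  destruct (refine D1 D2 a b Hc1 Hc2) as [P4 [HP1 [HP2 [HP3 HP4]]]].
  rewrite HP3, HP4.
  assert (S1 := HSH _ (chain4_p1 _ _ _ HP1) (refine_fine1 _ _ _ _ _ Hf1 (fun u v s t h => proj1 (HP2 u v s t h)))).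
  assert (S2 := HSH _ (chain4_p2 _ _ _ HP1) (refine_fine2 _ _ _ _ _ Hf2 (fun u v s t h => proj2 (HP2 u v s t h)))).
  rewrite sum4_p1 in S1. rewrite sum4_p2 in S2. unfold dd in S1, S2.
  rewrite sum4_minus. eapply Rle_lt_trans; [apply sum4_abs|].
  eapply Rle_lt_trans.
  { apply sum4_le with (g := fun u v s t => Rabs (g s * (v - u) - (G v - G u)) + Rabs (g t * (v - u) - (G v - G u))).
    intros u v s t Hi. pose proof (chain4_in _ _ _ _ _ _ _ HP1 Hi).
    replace (Rabs (g s) * (v - u) - Rabs (g t) * (v - u)) with
      (Rabs (g s * (v - u)) - Rabs (g t * (v - u))).
    2:{ rewrite !Rabs_mult, (Rabs_right (v - u)) by lra. ring. }
    eapply Rle_trans; [apply Rabs_triang_inv2|].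
    replace (g s * (v - u) - g t * (v - u)) with ((g s * (v - u) - (G v - G u)) - (g t * (v - u) - (G v - G u))) by ring.
    eapply Rle_trans; [apply Rabs_triang|]. rewrite Rabs_Ropp. lra. }
  assert (E : forall f1 f2 l, sum4 (fun u v s t => f1 u v s t + f2 u v s t) l = sum4 f1 l + sum4 f2 l).
  { intros f1 f2 l. induction l as [|[[[u v] s] t] l IH]; simpl; [lra| rewrite IH; lra]. }
  rewrite E. lra.
Qed.
End Gstuff.


Lemma mcs_zero a b : McS_int (fun _ => 0) a b 0.
Proof. intros e He. exists (fun _ => 1). split; [intros; lra|]. intros l Hc Hf.
  rewrite st_id. replace (sumf (fun u v t => 0 * (v - u)) l) with 0.
  - rewrite Rminus_0_r, Rabs_R0; auto.
  - clear. induction l as [|[[u v] t] l IH]; simpl; [lra| rewrite <- IH; ring]. Qed.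

Lemma abs_le_inv x e : Rabs x <= e -> - e <= x <= e.
Proof. intros H. pose proof (Rle_abs x). pose proof (Rle_abs (-x)). rewrite Rabs_Ropp in H1. lra. Qed.

Section Main.
Variables (g G N : R -> R).
Hypothesis hg : L1 g.
Hypothesis hG : forall x, Leb_int_lower g x (G x).
Hypothesis hN : forall u v, u <= v -> McS_int (fun y => Rabs (g y)) u v (N v - N u).

Lemma N_mono u v : u <= v -> N u <= N v.
Proof. intros H. assert (0 <= N v - N u); [|lra].
  apply (mcs_mono (fun _ => 0) (fun y => Rabs (g y)) u v); auto.
  - intros; apply Rabs_pos.
  - apply mcs_zero. Qed.

Lemma N_bound : exists B, forall u v, u <= v -> N v - N u <= B.
Proof. destruct (proj2 hg) as [B HB]. exists B. intros u v H. apply (HB u v); auto. Qed.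

Lemma est u v phi c eta J : u <= v -> (forall y, u <= y <= v -> Rabs (phi y - c) <= eta) ->
  McS_int (fun y => phi y * g y) u v J -> Rabs (J - c * (G v - G u)) <= eta * (N v - N u).
Proof.
  intros Huv Hp HJ.
  assert (I1 := mcs_plus _ _ _ _ _ _ (mcs_scal c _ _ _ _ (primG g G hg hG u v Huv)) (mcs_scal eta _ _ _ _ (hN u v Huv))).
  assert (I2 := mcs_plus _ _ _ _ _ _ (mcs_scal c _ _ _ _ (primG g G hg hG u v Huv)) (mcs_scal (-eta) _ _ _ _ (hN u v Huv))).
  assert (Pw : forall y, u <= y <= v -> Rabs (phi y * g y - c * g y) <= eta * Rabs (g y)).
  { intros y Hy. replace (phi y * g y - c * g y) with ((phi y - c) * g y) by ring.
    rewrite Rabs_mult. apply Rmult_le_compat_r; [apply Rabs_pos| auto]. }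
  assert (U : J <= c * (G v - G u) + eta * (N v - N u)).
  { refine (mcs_mono _ _ u v _ _ Huv _ HJ I1). intros y Hy. pose proof (abs_le_inv _ _ (Pw y Hy)). simpl. lra. }
  assert (L : c * (G v - G u) + - eta * (N v - N u) <= J).
  { refine (mcs_mono _ _ u v _ _ Huv _ I2 HJ). intros y Hy. pose proof (abs_le_inv _ _ (Pw y Hy)). simpl. lra. }
  apply Rabs_le. lra.
Qed.

Lemma G_N u v : u <= v -> Rabs (G v - G u) <= N v - N u.
Proof. intros H.
  assert (I : McS_int (fun y => (fun _ => 1) y * g y) u v (G v - G u)).
  { apply (mcs_ext g); [intros; simpl; ring| apply primG; auto]. }
  pose proof (est u v (fun _ => 1) 0 1 _ H (fun y _ => ltac:(rewrite Rminus_0_r, Rabs_R1; lra)) I).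
  rewrite Rmult_0_l, Rminus_0_r, Rmult_1_l in H0. auto. Qed.

Lemma Ntail_p e : 0 < e -> exists A, forall u v, A <= u -> u <= v -> N v - N u < e.
Proof.
  intros He. destruct N_bound as [B HB].
  set (E := fun y => exists x, y = N x).
  assert (Hb : bound E).
  { exists (N 0 + B). intros y [x ->]. destruct (Rle_dec 0 x).
    - specialize (HB 0 x r); lra.
    - pose proof (N_mono x 0 ltac:(lra)). pose proof (HB 0 0 (Rle_refl 0)). lra. }
  destruct (completeness E Hb (ex_intro _ (N 0) (ex_intro _ 0 eq_refl))) as [L [HL1 HL2]].
  assert (Hx : exists x0, L - e < N x0).
  { apply Classical_Prop.NNPP; intros Hn. assert (L <= L - e); [|lra].
    apply HL2. intros y [x ->]. apply Rnot_lt_le. intros Hlt. apply Hn. exists x; lra. }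
  destruct Hx as [x0 Hx0]. exists x0. intros u v Hu Huv.
  pose proof (HL1 (N v) (ex_intro _ v eq_refl)). pose proof (N_mono _ _ Hu). lra.
Qed.

Lemma Ntail_m e : 0 < e -> exists A, forall u v, u <= v -> v <= A -> N v - N u < e.
Proof.
  intros He. destruct N_bound as [B HB].
  set (E := fun y => exists x, y = - N x).
  assert (Hb : bound E).
  { exists (- N 0 + B). intros y [x ->]. destruct (Rle_dec x 0).
    - specialize (HB x 0 r); lra.
    - pose proof (N_mono 0 x ltac:(lra)). pose proof (HB 0 0 (Rle_refl 0)). lra. }
  destruct (completeness E Hb (ex_intro _ (- N 0) (ex_intro _ 0 eq_refl))) as [L [HL1 HL2]].
  assert (Hx : exists x0, L - e < - N x0).
  { apply Classical_Prop.NNPP; intros Hn. assert (L <= L - e); [|lra].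
    apply HL2. intros y [x ->]. apply Rnot_lt_le. intros Hlt. apply Hn. exists x; lra. }
  destruct Hx as [x0 Hx0]. exists x0. intros u v Huv Hv.
  pose proof (HL1 (- N u) (ex_intro _ u eq_refl)). pose proof (N_mono _ _ Hv). lra.
Qed.

Lemma G_minf : lim_minf G 0.
Proof.
  intros e He. destruct (hG 0 e He) as [M HM]. exists (Rmin (- M) 0). intros x Hx.
  assert (x < - M) by (eapply Rlt_le_trans; [apply Hx| apply Rmin_l]).
  assert (x <= 0) by (left; eapply Rlt_le_trans; [apply Hx| apply Rmin_r]).
  specialize (HM x (G 0 - G x) H H0 (primG g G hg hG x 0 H0)).
  replace (G 0 - G x - G 0) with (- (G x - 0)) in HM by ring. rewrite Rabs_Ropp in HM. auto.
Qed.

Lemma G_pinf : exists Ginf, lim_pinf G Ginf.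
Proof.
  apply cauchy_pinf. intros e He. destruct (Ntail_p e He) as [A HA]. exists A. intros u v Hu Hv.
  destruct (Rle_dec u v).
  - rewrite <- Rabs_Ropp. replace (- (G u - G v)) with (G v - G u) by ring.
    eapply Rle_lt_trans; [apply G_N; auto| apply HA; auto].
  - eapply Rle_lt_trans; [apply G_N; lra| apply HA; lra].
Qed.

Section Phi.
Variables (phi : R -> R) (M : R).
Hypothesis hM : forall y, Rabs (phi y) <= M.
Hypothesis hU : forall e, 0 < e -> exists r, 0 < r /\ forall y y', Rabs (y - y') < r -> Rabs (phi y - phi y') < e.

Lemma phi_int a b : a <= b -> exists J, McS_int (fun y => phi y * g y) a b J.
Proof.
  intros Hab. apply mcs_cauchy; auto. intros e He.
  assert (HM0 : 0 <= M) by (eapply Rle_trans; [apply Rabs_pos| apply (hM 0)]).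
  set (K := N b - N a). assert (HK : 0 <= K) by (pose proof (N_mono a b Hab); unfold K; lra).
  destruct (hU (e / (3 * (K + 1)))) as [r [Hr Hr2]]. { apply Rdiv_lt_0_compat; lra. }
  destruct (saks_henstock g G a b (fun u v _ h _ => primG g G hg hG u v h) Hab (e / (3 * (M + 1)))) as [d [Hd HSH]].
  { apply Rdiv_lt_0_compat; lra. }
  assert (Hr' : forall x : R, 0 < r / 2) by (intros; lra).
  destruct (min_gauge d (fun _ => r/2) Hd Hr') as [Hm [Hm1 Hm2]].
  exists (fun x => Rmin (d x) (r/2)). split; auto. intros D1 D2 Hc1 Hf1 Hc2 Hf2.
  destruct (refine D1 D2 a b Hc1 Hc2) as [P4 [HP1 [HP2 [HP3 HP4]]]].
  assert (S1 := HSH _ (chain4_p1 _ _ _ HP1) (refine_fine1 _ _ _ _ _ (mcs_fine_mono _ _ _ _ _ Hm1 Hf1) (fun u v s t h => proj1 (HP2 u v s t h)))).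
  assert (S2 := HSH _ (chain4_p2 _ _ _ HP1) (refine_fine2 _ _ _ _ _ (mcs_fine_mono _ _ _ _ _ Hm1 Hf2) (fun u v s t h => proj2 (HP2 u v s t h)))).
  rewrite sum4_p1 in S1. rewrite sum4_p2 in S2. unfold dd in S1, S2.
  rewrite HP3, HP4, sum4_minus. eapply Rle_lt_trans; [apply sum4_abs|].
  assert (E : forall f1 f2 l, sum4 (fun u v s t => f1 u v s t + f2 u v s t) l = sum4 f1 l + sum4 f2 l).
  { intros f1 f2 l. induction l as [|[[[u v] s] t] l IH]; simpl; [lra| rewrite IH; lra]. }
  eapply Rle_lt_trans.
  { apply sum4_le with (g := fun u v s t => (M * Rabs (g s * (v - u) - (G v - G u)) + M * Rabs (g t * (v - u) - (G v - G u)))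
       + e / (3 * (K + 1)) * (N v - N u)).
    intros u v s t Hi. pose proof (chain4_in _ _ _ _ _ _ _ HP1 Hi) as Huv.
    destruct (HP2 u v s t Hi) as [[u1 [v1 [Hi1 [Hu1 Hv1]]]] [u2 [v2 [Hi2 [Hu2 Hv2]]]]].
    destruct (Hf1 _ _ _ Hi1) as [_ [A1 A2]]. destruct (Hf2 _ _ _ Hi2) as [_ [B1 B2]].
    pose proof (Hm2 s). pose proof (Hm2 t).
    assert (Hst : Rabs (s - t) < r) by (apply Rabs_def1; lra).
    specialize (Hr2 s t Hst).
    replace (phi s * g s * (v - u) - phi t * g t * (v - u))
      with (phi s * (g s * (v - u) - (G v - G u)) - phi t * (g t * (v - u) - (G v - G u)) + (phi s - phi t) * (G v - G u)).
    2:{ simpl. ring. }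
    eapply Rle_trans; [apply Rabs_triang|]. apply Rplus_le_compat.
    - eapply Rle_trans; [apply Rabs_triang|]. rewrite Rabs_Ropp, !Rabs_mult.
      apply Rplus_le_compat; apply Rmult_le_compat_r; auto; apply Rabs_pos.
    - rewrite Rabs_mult. apply Rmult_le_compat; try apply Rabs_pos; [lra| apply G_N; lra]. }
  rewrite !E, !sum4_scal, telescope4 with (a := a) (b := b) by auto. fold K.
  assert (e / (3 * (K + 1)) * K <= e / 3).
  { apply Rle_trans with (e / (3 * (K + 1)) * (K + 1)); [apply Rmult_le_compat_l; [left; apply Rdiv_lt_0_compat; lra| lra]|].
    right; field; lra. }
  assert (M * (e / (3 * (M + 1))) < e / 3).
  { apply Rlt_le_trans with ((M + 1) * (e / (3 * (M + 1)))); [apply Rmult_lt_compat_r; [apply Rdiv_lt_0_compat; lra| lra]|].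
    right; field; lra. }
  assert (M * sum4 (fun u v s _ => Rabs (g s * (v - u) - (G v - G u))) P4 <= M * (e / (3 * (M + 1)))) by (apply Rmult_le_compat_l; auto).
  assert (M * sum4 (fun u v _ t => Rabs (g t * (v - u) - (G v - G u))) P4 <= M * (e / (3 * (M + 1)))) by (apply Rmult_le_compat_l; auto).
  lra.
Qed.

Lemma phi_hs a b c J : a <= b -> McS_int (fun y => phi y * g y) a b J ->
  HS_int (fun y => c - phi y) G a b (c * (G b - G a) - J).
Proof.
  intros Hab HJ e He.
  assert (HM0 : 0 <= M) by (eapply Rle_trans; [apply Rabs_pos| apply (hM 0)]).
  destruct (saks_henstock g G a b (fun u v _ h _ => primG g G hg hG u v h) Hab (e / (2 * (M + 1)))) as [d [Hd HSH]].
  { apply Rdiv_lt_0_compat; lra. }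
  destruct (HJ (e/2) ltac:(lra)) as [d2 [Hd2 P2]].
  destruct (min_gauge d d2 Hd Hd2) as [Hm [Hm1 Hm2]].
  exists (fun x => Rmin (d x) (d2 x)). split; auto. intros l Hc Hf.
  apply (hen_mcs a b) in Hf; auto.
  specialize (HSH l Hc (mcs_fine_mono _ _ _ _ _ Hm1 Hf)). specialize (P2 l Hc (mcs_fine_mono _ _ _ _ _ Hm2 Hf)).
  rewrite st_id in P2. rewrite st_sum_sumf.
  rewrite (sumf_ext _ (fun u v t => c * (G v - G u) + (- (phi t * (G v - G u))))) by (intros; ring).
  rewrite sumf_plus, sumf_scal, telescope with (a := a) (b := b) by auto.
  assert (Hd' : Rabs (sumf (fun u v t => phi t * g t * (v - u)) l - sumf (fun u v t => phi t * (G v - G u)) l) <= e/2).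
  { rewrite (sumf_ext (fun u v t => phi t * (G v - G u)) (fun u v t => - (phi t * (G v - G u)) * (-1))) by (intros; ring).
    replace (sumf (fun u v t => phi t * g t * (v - u)) l - sumf (fun u v t => - (phi t * (G v - G u)) * -1) l)
      with (sumf (fun u v t => phi t * dd g G u v t) l).
    2:{ clear. induction l as [|[[u v] t] l IH]; simpl; [ring| rewrite IH; unfold dd; ring]. }
    eapply Rle_trans; [apply sumf_abs|].
    eapply Rle_trans; [apply sumf_le with (g := fun u v t => M * Rabs (dd g G u v t))|].
    - intros. rewrite Rabs_mult. apply Rmult_le_compat_r; [apply Rabs_pos| auto].
    - rewrite sumf_scal. apply Rle_trans with ((M + 1) * (e / (2 * (M + 1)))).
      + apply Rmult_le_compat; try lra. clear -HSH. induction l as [|[[u v] t] l IH]; simpl in *; [lra|].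
        pose proof (Rabs_pos (dd g G u v t)). 
        assert (0 <= sumf (fun u v t => Rabs (dd g G u v t)) l); [|lra].
        clear. induction l as [|[[u v] t] l IH]; simpl; [lra|]. pose proof (Rabs_pos (dd g G u v t)); lra.
      + right; field; lra. }
  assert (Hs : sumf (fun u v t => - (phi t * (G v - G u))) l = - sumf (fun u v t => phi t * (G v - G u)) l).
  { clear. induction l as [|[[u v] t] l IH]; simpl; [ring| rewrite IH; ring]. }
  rewrite Hs.
  apply Rabs_def2 in P2. apply abs_le_inv in Hd'. apply Rabs_def1; lra.
Qed.
End Phi.
End Main.


Section FF.
Variables (F : R -> R) (l1 l2 : R).
Hypothesis hc : continuity F.
Hypothesis hp : lim_pinf F l1.
Hypothesis hm : lim_minf F l2.

Lemma F_bounded : exists MF, forall s, Rabs (F s) <= MF.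
Proof.
  destruct (hp 1 ltac:(lra)) as [R0 H0]. destruct (hm 1 ltac:(lra)) as [R1 H1].
  set (lo := Rmin R1 R0). set (hi := Rmax R1 R0).
  assert (Hlh : lo <= hi) by (unfold lo, hi; eapply Rle_trans; [apply Rmin_l| apply Rmax_l]).
  destruct (continuity_ab_maj F lo hi Hlh (fun c _ => hc c)) as [x1 [Hx1 _]].
  destruct (continuity_ab_min F lo hi Hlh (fun c _ => hc c)) as [x2 [Hx2 _]].
  exists (Rabs (F x1) + Rabs (F x2) + Rabs l1 + Rabs l2 + 1). intros s.
  pose proof (Rabs_pos (F x1)). pose proof (Rabs_pos (F x2)). pose proof (Rabs_pos l1). pose proof (Rabs_pos l2).
  destruct (Rlt_dec hi s) as [Hs|Hs].
  - assert (Hr : R0 < s) by (eapply Rle_lt_trans; [apply Rmax_r| apply Hs]).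
    specialize (H0 s Hr). replace (F s) with ((F s - l1) + l1) by ring.
    eapply Rle_trans; [apply Rabs_triang| lra].
  - destruct (Rlt_dec s lo) as [Hs'|Hs'].
    + assert (Hr : s < R1) by (eapply Rlt_le_trans; [apply Hs'| apply Rmin_l]).
      specialize (H1 s Hr). replace (F s) with ((F s - l2) + l2) by ring.
      eapply Rle_trans; [apply Rabs_triang| lra].
    + assert (Hi : lo <= s <= hi) by lra. specialize (Hx1 s Hi). specialize (Hx2 s Hi).
      apply Rabs_le. pose proof (Rle_abs (F x1)) as Q1. pose proof (Rle_abs (- F x2)) as Q2. rewrite Rabs_Ropp in Q2. lra.
Qed.

Lemma F_unif : forall e, 0 < e -> exists r, 0 < r /\ forall s s', Rabs (s - s') < r -> Rabs (F s - F s') < e.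
Proof.
  intros e He.
  destruct (hp (e/2) ltac:(lra)) as [R0 H0]. destruct (hm (e/2) ltac:(lra)) as [R1 H1].
  set (lo := Rmin R1 R0 - 1). set (hi := Rmax R1 R0 + 1).
  assert (Hlo1 : lo + 1 <= R1) by (unfold lo; pose proof (Rmin_l R1 R0); lra).
  assert (Hhi1 : R0 <= hi - 1) by (unfold hi; pose proof (Rmax_r R1 R0); lra).
  destruct (Heine F (fun c => lo <= c <= hi) (compact_P3 lo hi) (fun c _ => hc c) (mkposreal (e) He)) as [[dl Hdl] Hd].
  simpl in Hd.
  exists (Rmin dl 1). split; [apply Rmin_glb_lt; lra|]. intros s s' Hss.
  assert (A1 : Rabs (s - s') < dl) by (eapply Rlt_le_trans; [apply Hss| apply Rmin_l]).
  assert (A2 : Rabs (s - s') < 1) by (eapply Rlt_le_trans; [apply Hss| apply Rmin_r]).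
  apply Rabs_def2 in A2.
  destruct (Rle_dec lo s); destruct (Rle_dec s hi); destruct (Rle_dec lo s'); destruct (Rle_dec s' hi);
  try (apply Hd; auto; lra);
  try (assert (s < R1) by lra; assert (s' < R1) by lra;
       specialize (H1 _ H) as X1; specialize (H1 _ H2) as X2;
       replace (F s - F s') with ((F s - l2) - (F s' - l2)) by ring;
       eapply Rle_lt_trans; [apply Rabs_triang|]; rewrite Rabs_Ropp; lra);
  try (assert (R0 < s) by lra; assert (R0 < s') by lra;
       specialize (H0 _ H) as X1; specialize (H0 _ H2) as X2;
       replace (F s - F s') with ((F s - l1) - (F s' - l1)) by ring;
       eapply Rle_lt_trans; [apply Rabs_triang|]; rewrite Rabs_Ropp; lra).
Qed.
End FF.

Lemma lim_pinf_bound f l b c K : lim_pinf f l -> (forall y, b <= y -> Rabs (f y - c) <= K) -> Rabs (l - c) <= K.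
Proof. intros Hl Hb. apply eps_le. intros e He. destruct (Hl e He) as [M HM].
  set (y := Rmax b (M + 1)). assert (b <= y) by apply Rmax_l. assert (M < y) by (pose proof (Rmax_r b (M+1)); unfold y; lra).
  specialize (HM y H0). specialize (Hb y H).
  replace (l - c) with (-(f y - l) + (f y - c)) by ring. eapply Rle_trans; [apply Rabs_triang|]. rewrite Rabs_Ropp. lra. Qed.

Lemma lim_minf_bound f l b c K : lim_minf f l -> (forall y, y <= b -> Rabs (f y - c) <= K) -> Rabs (l - c) <= K.
Proof. intros Hl Hb. apply eps_le. intros e He. destruct (Hl e He) as [M HM].
  set (y := Rmin b (M - 1)). assert (y <= b) by apply Rmin_l. assert (y < M) by (pose proof (Rmin_r b (M-1)); unfold y; lra).
  specialize (HM y H0). specialize (Hb y H).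
  replace (l - c) with (-(f y - l) + (f y - c)) by ring. eapply Rle_trans; [apply Rabs_triang|]. rewrite Rabs_Ropp. lra. Qed.


Section Final.
Variables (F g G N : R -> R) (P : R -> R -> R) (Lp Lm : R -> R) (Finf MF B : R).
Hypothesis hg : L1 g.
Hypothesis hG : forall x, Leb_int_lower g x (G x).
Hypothesis hN : forall u v, u <= v -> McS_int (fun y => Rabs (g y)) u v (N v - N u).
Hypothesis hFp : lim_pinf F Finf.
Hypothesis hF0 : lim_minf F 0.
Hypothesis hMF : forall s, Rabs (F s) <= MF.
Hypothesis hFU : forall e, 0 < e -> exists r, 0 < r /\ forall s s', Rabs (s - s') < r -> Rabs (F s - F s') < e.
Hypothesis hB : forall u v, u <= v -> N v - N u <= B.
Hypothesis hP : forall x u v, u <= v -> McS_int (fun y => F (x - y) * g y) u v (P x v - P x u).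
Hypothesis hLp : forall x, lim_pinf (P x) (Lp x).
Hypothesis hLm : forall x, lim_minf (P x) (Lm x).

Definition conv x := Lp x - Lm x.

Lemma MF0 : 0 <= MF.
Proof. eapply Rle_trans; [apply Rabs_pos| apply (hMF 0)]. Qed.
Lemma B0 : 0 <= B.
Proof. pose proof (hB 0 0 (Rle_refl 0)). lra. Qed.

Lemma Pdiff x u v : u <= v -> Rabs (P x v - P x u) <= MF * (N v - N u).
Proof. intros H. pose proof (est g G N hg hG hN u v (fun y => F (x - y)) 0 MF _ H
   (fun y _ => ltac:(rewrite Rminus_0_r; apply hMF)) (hP x u v H)).
  rewrite Rmult_0_l, Rminus_0_r in H0. auto. Qed.

Lemma approx e : 0 < e -> exists Am Ap, forall x a b, a <= Am -> Ap <= b -> Rabs (conv x - (P x b - P x a)) <= e.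
Proof.
  intros He. pose proof MF0.
  set (e1 := e / (2 * (MF + 1))). assert (He1 : 0 < e1) by (apply Rdiv_lt_0_compat; lra).
  destruct (Ntail_p g N hg hN e1 He1) as [Ap HAp]. destruct (Ntail_m g N hg hN e1 He1) as [Am HAm].
  exists Am, Ap. intros x a b Ha Hb.
  assert (Q1 : Rabs (Lp x - P x b) <= MF * e1).
  { apply (lim_pinf_bound (P x) _ b); auto. intros y Hy.
    eapply Rle_trans; [apply Pdiff; auto|]. apply Rmult_le_compat_l; auto. left; apply HAp; lra. }
  assert (Q2 : Rabs (Lm x - P x a) <= MF * e1).
  { apply (lim_minf_bound (P x) _ a); auto. intros y Hy.
    rewrite <- Rabs_Ropp. replace (- (P x y - P x a)) with (P x a - P x y) by ring.
    eapply Rle_trans; [apply Pdiff; auto|]. apply Rmult_le_compat_l; auto. left; apply HAm; lra. }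
  assert (MF * e1 <= e / 2).
  { unfold e1. apply Rle_trans with ((MF + 1) * (e / (2 * (MF + 1)))).
    - apply Rmult_le_compat_r; [left; apply Rdiv_lt_0_compat; lra| lra].
    - right; field; lra. }
  unfold conv. replace (Lp x - Lm x - (P x b - P x a)) with ((Lp x - P x b) - (Lm x - P x a)) by ring.
  eapply Rle_trans; [apply Rabs_triang|]. rewrite Rabs_Ropp. lra.
Qed.

Lemma far e : 0 < e -> exists M0, 0 <= M0 /\ forall x a b, a < - M0 -> M0 < b -> Rabs (conv x - (P x b - P x a)) <= e.
Proof.
  intros He. destruct (approx e He) as [Am [Ap H]]. exists (Rabs Am + Rabs Ap). split.
  { pose proof (Rabs_pos Am); pose proof (Rabs_pos Ap); lra. }
  intros x a b Ha Hb. apply H.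
  - pose proof (Rle_abs (- Am)). rewrite Rabs_Ropp in H0. pose proof (Rabs_pos Ap). lra.
  - pose proof (Rle_abs Ap). pose proof (Rabs_pos Am). lra.
Qed.

Lemma leb x : Leb_int_R (fun y => F (x - y) * g y) (conv x).
Proof.
  split; [split|].
  - intros a b Hab. exists (P x b - P x a). auto.
  - exists (MF * B). intros a b J Hab HJ.
    assert (I := mcs_scal MF _ _ _ _ (hN a b Hab)).
    eapply Rle_trans; [eapply (mcs_mono _ _ a b _ _ Hab); [| exact HJ| exact I]|].
    + intros y Hy. simpl. rewrite Rabs_mult. apply Rmult_le_compat_r; [apply Rabs_pos| auto].
    + apply Rmult_le_compat_l; [apply MF0| auto].
  - intros e He. destruct (far (e/2) ltac:(lra)) as [M0 [HM0 HM]]. exists M0.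
    intros a b J Ha Hb HJ.
    assert (Hab : a <= b) by lra.
    rewrite (mcs_unique _ a b J (P x b - P x a) Hab HJ (hP x a b Hab)).
    specialize (HM x a b Ha Hb). rewrite <- Rabs_Ropp.
    replace (- (P x b - P x a - conv x)) with (conv x - (P x b - P x a)) by ring. lra.
Qed.

Variable Ginf : R.
Hypothesis hGp : lim_pinf G Ginf.

Lemma conv_ac x : conv_AC_BV F G x (conv x).
Proof.
  exists Finf, Ginf. split; [auto|]. split; [auto|]. split.
  - intros a b Hab. exists (Finf * (G b - G a) - (P x b - P x a)).
    apply (phi_hs g G hg hG (fun y => F (x - y)) MF (fun y => hMF (x - y)) a b Finf _ Hab (hP x a b Hab)).
  - intros e He. pose proof (Rabs_pos Finf) as HF.
    set (e1 := e / (3 * (Rabs Finf + 1))). assert (He1 : 0 < e1) by (apply Rdiv_lt_0_compat; lra).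
    assert (Hk : Rabs Finf * e1 < e / 3).
    { unfold e1. apply Rlt_le_trans with ((Rabs Finf + 1) * (e / (3 * (Rabs Finf + 1)))).
      - apply Rmult_lt_compat_r; [apply Rdiv_lt_0_compat; lra| lra].
      - right; field; lra. }
    destruct (far (e/3) ltac:(lra)) as [M0 [HM0 HM]].
    destruct (hGp e1 He1) as [M1 HM1]. destruct (G_minf g G hg hG e1 He1) as [M2 HM2].
    exists (Rmax M0 (Rmax (Rabs M1) (Rabs M2))). intros a b J Ha Hb HJ.
    pose proof (Rmax_l M0 (Rmax (Rabs M1) (Rabs M2))). pose proof (Rmax_r M0 (Rmax (Rabs M1) (Rabs M2))).
    pose proof (Rmax_l (Rabs M1) (Rabs M2)). pose proof (Rmax_r (Rabs M1) (Rabs M2)).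
    pose proof (Rle_abs M1). pose proof (Rle_abs (- M2)). rewrite Rabs_Ropp in H4.
    assert (Hab : a <= b) by lra.
    rewrite (hs_unique _ _ a b J (Finf * (G b - G a) - (P x b - P x a)) Hab HJ
       (phi_hs g G hg hG (fun y => F (x - y)) MF (fun y => hMF (x - y)) a b Finf _ Hab (hP x a b Hab))).
    specialize (HM x a b ltac:(lra) ltac:(lra)). specialize (HM1 b ltac:(lra)). specialize (HM2 a ltac:(lra)).
    rewrite Rminus_0_r in HM2.
    replace (Finf * (G b - G a) - (P x b - P x a) - (Finf * Ginf - conv x))
      with (Finf * (G b - Ginf) - Finf * G a + (conv x - (P x b - P x a))) by ring.
    eapply Rle_lt_trans; [apply Rabs_triang|].
    eapply Rle_lt_trans; [apply Rplus_le_compat_r, Rabs_triang|]. rewrite Rabs_Ropp, !Rabs_mult.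
    assert (Rabs Finf * Rabs (G b - Ginf) <= Rabs Finf * e1) by (apply Rmult_le_compat_l; lra).
    assert (Rabs Finf * Rabs (G a) <= Rabs Finf * e1) by (apply Rmult_le_compat_l; lra).
    lra.
Qed.

Lemma diff_int x x0 a b : a <= b ->
  McS_int (fun y => (F (x - y) - F (x0 - y)) * g y) a b ((P x b - P x a) - (P x0 b - P x0 a)).
Proof. intros Hab.
  pose proof (mcs_plus _ _ _ _ _ _ (hP x a b Hab) (mcs_scal (-1) _ _ _ _ (hP x0 a b Hab))) as I.
  replace (P x b - P x a - (P x0 b - P x0 a)) with (P x b - P x a + -1 * (P x0 b - P x0 a)) by ring.
  eapply mcs_ext; [| exact I]. intros y _. simpl. ring. Qed.

Lemma conv_cont : continuity conv.
Proof.
  intros x0. unfold continuity_pt, continue_in, limit1_in, limit_in. simpl. unfold R_dist.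
  intros e He. pose proof B0.
  set (eta := e / (4 * (B + 1))). assert (Heta : 0 < eta) by (apply Rdiv_lt_0_compat; lra).
  destruct (hFU eta Heta) as [r [Hr Hr2]].
  destruct (far (e/4) ltac:(lra)) as [M0 [HM0 HM]].
  exists r. split; [lra|]. intros x [_ Hx].
  set (a := - M0 - 1). set (b := M0 + 1). assert (Hab : a <= b) by (unfold a, b; lra).
  pose proof (HM x a b ltac:(unfold a; lra) ltac:(unfold b; lra)) as A1.
  pose proof (HM x0 a b ltac:(unfold a; lra) ltac:(unfold b; lra)) as A2.
  pose proof (est g G N hg hG hN a b (fun y => F (x - y) - F (x0 - y)) 0 eta _ Hab
    (fun y _ => ltac:(rewrite Rminus_0_r; left; apply Hr2; replace (x - y - (x0 - y)) with (x - x0) by ring; auto))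
    (diff_int x x0 a b Hab)) as A3.
  rewrite Rmult_0_l, Rminus_0_r in A3.
  assert (eta * (N b - N a) <= eta * B) by (apply Rmult_le_compat_l; [lra| apply hB; auto]).
  assert (eta * B < e / 4).
  { unfold eta. apply Rlt_le_trans with (e / (4 * (B + 1)) * (B + 1)).
    - apply Rmult_lt_compat_l; [exact Heta| lra].
    - right; field; lra. }
  replace (conv x - conv x0) with ((conv x - (P x b - P x a)) + ((P x b - P x a) - (P x0 b - P x0 a)) - (conv x0 - (P x0 b - P x0 a))) by ring.
  eapply Rle_lt_trans; [apply Rabs_triang|]. rewrite Rabs_Ropp.
  eapply Rle_lt_trans; [apply Rplus_le_compat_r, Rabs_triang|]. lra.
Qed.

Lemma conv_pinf : lim_pinf conv (Finf * Ginf).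
Proof.
  intros e He. pose proof B0. pose proof (Rabs_pos Finf) as HF.
  set (e1 := e / (4 * (Rabs Finf + 1))). assert (He1 : 0 < e1) by (apply Rdiv_lt_0_compat; lra).
  assert (Hk : Rabs Finf * e1 < e / 4).
  { unfold e1. apply Rlt_le_trans with ((Rabs Finf + 1) * (e / (4 * (Rabs Finf + 1)))).
    - apply Rmult_lt_compat_r; [apply Rdiv_lt_0_compat; lra| lra].
    - right; field; lra. }
  set (eta := e / (4 * (B + 1))). assert (Heta : 0 < eta) by (apply Rdiv_lt_0_compat; lra).
  assert (eta * B < e / 4).
  { unfold eta. apply Rlt_le_trans with (e / (4 * (B + 1)) * (B + 1)).
    - apply Rmult_lt_compat_l; [exact Heta| lra].
    - right; field; lra. }
  destruct (far (e/4) ltac:(lra)) as [M0 [HM0 HM]].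
  destruct (hGp e1 He1) as [M1 HM1]. destruct (G_minf g G hg hG e1 He1) as [M2 HM2].
  destruct (hFp eta Heta) as [RF HRF].
  set (b := Rmax M0 M1 + 1). set (a := Rmin (- M0) M2 - 1).
  assert (Hb1 : M0 < b) by (unfold b; pose proof (Rmax_l M0 M1); lra).
  assert (Hb2 : M1 < b) by (unfold b; pose proof (Rmax_r M0 M1); lra).
  assert (Ha1 : a < - M0) by (unfold a; pose proof (Rmin_l (- M0) M2); lra).
  assert (Ha2 : a < M2) by (unfold a; pose proof (Rmin_r (- M0) M2); lra).
  assert (Hab : a <= b) by lra.
  exists (b + RF). intros x Hx.
  specialize (HM x a b Ha1 Hb1). specialize (HM1 b Hb2). specialize (HM2 a Ha2). rewrite Rminus_0_r in HM2.
  pose proof (est g G N hg hG hN a b (fun y => F (x - y)) Finf eta _ Hab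
    (fun y Hy => ltac:(left; apply HRF; lra)) (hP x a b Hab)) as A3.
  assert (eta * (N b - N a) <= eta * B) by (apply Rmult_le_compat_l; [lra| apply hB; auto]).
  replace (conv x - Finf * Ginf) with ((conv x - (P x b - P x a)) + (P x b - P x a - Finf * (G b - G a))
     + (Finf * (G b - Ginf) - Finf * G a)) by ring.
  eapply Rle_lt_trans; [apply Rabs_triang|].
  eapply Rle_lt_trans; [apply Rplus_le_compat_r, Rabs_triang|].
  eapply Rle_lt_trans; [apply Rplus_le_compat_l, Rabs_triang|]. rewrite Rabs_Ropp, !Rabs_mult.
  assert (Rabs Finf * Rabs (G b - Ginf) <= Rabs Finf * e1) by (apply Rmult_le_compat_l; lra).
  assert (Rabs Finf * Rabs (G a) <= Rabs Finf * e1) by (apply Rmult_le_compat_l; lra).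
  lra.
Qed.

Lemma conv_minf : lim_minf conv 0.
Proof.
  intros e He. pose proof B0.
  set (eta := e / (2 * (B + 1))). assert (Heta : 0 < eta) by (apply Rdiv_lt_0_compat; lra).
  assert (eta * B < e / 2).
  { unfold eta. apply Rlt_le_trans with (e / (2 * (B + 1)) * (B + 1)).
    - apply Rmult_lt_compat_l; [exact Heta| lra].
    - right; field; lra. }
  destruct (far (e/2) ltac:(lra)) as [M0 [HM0 HM]].
  destruct (hF0 eta Heta) as [RF HRF].
  set (a := - M0 - 1). set (b := M0 + 1). assert (Hab : a <= b) by (unfold a, b; lra).
  exists (a + RF). intros x Hx.
  specialize (HM x a b ltac:(unfold a; lra) ltac:(unfold b; lra)).
  pose proof (est g G N hg hG hN a b (fun y => F (x - y)) 0 eta _ Hab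
    (fun y Hy => ltac:(left; rewrite Rminus_0_r; rewrite <- (Rminus_0_r (F (x - y))); apply HRF; lra)) (hP x a b Hab)) as A3.
  rewrite Rmult_0_l, Rminus_0_r in A3.
  assert (eta * (N b - N a) <= eta * B) by (apply Rmult_le_compat_l; [lra| apply hB; auto]).
  rewrite Rminus_0_r.
  replace (conv x) with ((conv x - (P x b - P x a)) + (P x b - P x a)) by ring.
  eapply Rle_lt_trans; [apply Rabs_triang|]. lra.
Qed.
End Final.


Theorem mainTheorem13 (F g G : R -> R)
  (hF : in_BC F)
  (hg : L1 g)
  (hG : forall x, Leb_int_lower g x (G x)) :
  exists conv : R -> R,
    (forall x, conv_AC_BV F G x (conv x)) /\
    C0bar conv /\
    (forall x, Leb_int_R (fun y => F (x - y) * g y) (conv x)).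
Proof.
  destruct hF as [[Hc [[Finf HFp] [l2 HFm]]] HF0].
  destruct (F_bounded F Finf l2 Hc HFp HFm) as [MF HMF].
  pose proof (F_unif F Finf l2 Hc HFp HFm) as HFU.
  assert (HMF0 : 0 <= MF) by (eapply Rle_trans; [apply Rabs_pos| apply (HMF 0)]).
  destruct (mcs_prim _ (absg_int g G hg hG)) as [N hN].
  destruct (N_bound g N hg hN) as [B HB].
  destruct (G_pinf g G N hg hG hN) as [Ginf HGp].
  assert (HU : forall x e, 0 < e -> exists r, 0 < r /\ forall y y', Rabs (y - y') < r -> Rabs (F (x - y) - F (x - y')) < e).
  { intros x e He. destruct (HFU e He) as [r [Hr H]]. exists r. split; auto. intros y y' Hy.
    apply H. replace (x - y - (x - y')) with (- (y - y')) by ring. rewrite Rabs_Ropp; auto. }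
  destruct (choiceR (fun x Px => forall u v, u <= v -> McS_int (fun y => F (x - y) * g y) u v (Px v - Px u))) as [P hP].
  { intros x. apply mcs_prim. intros a b Hab.
    apply (phi_int g G N hg hG hN (fun y => F (x - y)) MF (fun y => HMF _) (HU x) a b Hab). }
  assert (HC : forall x e, 0 < e -> exists A, forall u v, A <= u -> A <= v -> Rabs (P x u - P x v) < e).
  { intros x e He. destruct (Ntail_p g N hg hN (e / (MF + 1))) as [A HA]. { apply Rdiv_lt_0_compat; lra. }
    assert (K : forall u v, A <= u -> u <= v -> Rabs (P x v - P x u) < e).
    { intros u v Hu Huv. eapply Rle_lt_trans; [apply (Pdiff F g G N P MF hg hG hN HMF hP x u v Huv)|].
      specialize (HA u v Hu Huv).
      apply Rle_lt_trans with (MF * (e / (MF + 1))); [apply Rmult_le_compat_l; lra|].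
      apply Rlt_le_trans with ((MF + 1) * (e / (MF + 1))).
      - apply Rmult_lt_compat_r; [apply Rdiv_lt_0_compat; lra| lra].
      - right; field; lra. }
    exists A. intros u v Hu Hv. destruct (Rle_dec u v).
    - rewrite <- Rabs_Ropp. replace (- (P x u - P x v)) with (P x v - P x u) by ring. auto.
    - apply K; auto; lra. }
  assert (HCm : forall x e, 0 < e -> exists A, forall u v, u <= A -> v <= A -> Rabs (P x u - P x v) < e).
  { intros x e He. destruct (Ntail_m g N hg hN (e / (MF + 1))) as [A HA]. { apply Rdiv_lt_0_compat; lra. }
    assert (K : forall u v, v <= A -> u <= v -> Rabs (P x v - P x u) < e).
    { intros u v Hu Huv. eapply Rle_lt_trans; [apply (Pdiff F g G N P MF hg hG hN HMF hP x u v Huv)|].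
      specialize (HA u v Huv Hu).
      apply Rle_lt_trans with (MF * (e / (MF + 1))); [apply Rmult_le_compat_l; lra|].
      apply Rlt_le_trans with ((MF + 1) * (e / (MF + 1))).
      - apply Rmult_lt_compat_r; [apply Rdiv_lt_0_compat; lra| lra].
      - right; field; lra. }
    exists A. intros u v Hu Hv. destruct (Rle_dec u v).
    - rewrite <- Rabs_Ropp. replace (- (P x u - P x v)) with (P x v - P x u) by ring. auto.
    - apply K; auto; lra. }
  destruct (choiceR (fun x l => lim_pinf (P x) l)) as [Lp hLp].
  { intros x. apply cauchy_pinf. apply HC. }
  destruct (choiceR (fun x l => lim_minf (P x) l)) as [Lm hLm].
  { intros x. apply cauchy_minf. apply HCm. }
  exists (conv Lp Lm). split; [|split].
  - intros x. apply (conv_ac F g G N P Lp Lm Finf MF) with (Ginf := Ginf); auto.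
  - split; [apply (conv_cont F g G N P Lp Lm MF B); auto|]. split.
    + exists (Finf * Ginf). apply (conv_pinf F g G N P Lp Lm Finf MF B); auto.
    + exists 0. apply (conv_minf F g G N P Lp Lm MF B); auto.
  - intros x. apply (leb F g G N P Lp Lm MF B); auto.
Qed.
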